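(* Let $q$ be an odd prime power, $m=2t$, and $n=\frac{q^m+1}{2}$. (1) If $m\ge4$, then every integer $i$ with $\frac{q^t+1}{2}\le i\le q^t+1$, $i\not\equiv0\pmod q$ and $i\notin\{\frac{q^t+1}{2},q^t+1\}$ is a coset leader modulo $n$ with $|C_i|=2m$, while $\frac{q^t+1}{2}$ and $q^t+1$ are not coset leaders modulo $n$. (2) If $m\ge8$, then every integer $i$ with $\frac{q^t+1}{2}\le i\le\frac{q^{t+1}-1}{2}$, $i\not\equiv0\pmod q$ and $i\notin X_1\cup X_2\cup X_3\cup X_4\cup X_5$ is a coset leader modulo $n$ with $|C_i|=2m$, while no element of $X_1\cup\dots\cup X_5$ in this range with $i\not\equiv 0\pmod q$ is a coset leader, where (all parameters integers) $X_1=\{aq^t+b:1\le b\le a\le\frac{q-1}{2}\}$, $X_2=\{aq^t-b:1\le b<a\le\frac{q-1}{2}\}$, $X_3=\{aq^t+\frac{q^t-1}{2}+b,\ aq^t+\frac{q^t+1}{2}-b:1\le b\le a<\frac{q-1}{2}\}$, $X_4=\{a(q^t+1)+\frac{q^t+1}{2}:0\le a<\frac{q-1}{2}\}$, $X_5=\{i:\frac{q^{t+1}-q^2}{2}+1\le i\le\frac{q^{t+1}-1}{2},\ q\nmid i\}$.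
   Context: For $0\le s\le n-1$, $C_s=\{sq^i\bmod n:i\ge0\}$ is the $q$-cyclotomic coset of $s$ modulo $n$; its least element is its coset leader. *)

(* Defs.v *)
From mathcomp Require Import all_boot.
Set Implicit Arguments. Unset Strict Implicit. Unset Printing Implicit Defensive.

Definition in_coset (q n s x : nat) : Prop := exists i : nat, x = (s * q ^ i) %% n.

(* The coset as a finite set of residues mod n.  The exponent i is taken in
   [0, n): by pigeonhole every value s q^i mod n (i >= 0) already occurs for
   some i < n, so this is exactly C_s. *)
Definition cyc_coset (q n s : nat) : {set 'I_n} :=
  [set x : 'I_n | [exists i : 'I_n, (s * q ^ i) %% n == x]].

Definition coset_leader (q n s : nat) : Prop :=
  s < n /\ forall x, in_coset q n s x -> s <= x.

Definition prime_power (q : nat) : Prop :=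
  exists p k, prime p /\ 0 < k /\ q = p ^ k.

Definition X1 (q t i : nat) : Prop :=
  exists a b, [/\ 1 <= b, b <= a, a <= (q - 1) %/ 2 & i = a * q ^ t + b].
Definition X2 (q t i : nat) : Prop :=
  exists a b, [/\ 1 <= b, b < a, a <= (q - 1) %/ 2 & i = a * q ^ t - b].
Definition X3 (q t i : nat) : Prop :=
  exists a b, [/\ 1 <= b, b <= a, a < (q - 1) %/ 2 &
    i = a * q ^ t + (q ^ t - 1) %/ 2 + b \/ i = a * q ^ t + (q ^ t + 1) %/ 2 - b].
Definition X4 (q t i : nat) : Prop :=
  exists a, a < (q - 1) %/ 2 /\ i = a * (q ^ t + 1) + (q ^ t + 1) %/ 2.
Definition X5 (q t i : nat) : Prop :=
  [/\ (q ^ t.+1 - q ^ 2) %/ 2 + 1 <= i, i <= (q ^ t.+1 - 1) %/ 2 & ~~ (q %| i)].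

(* Main.v *)
Require Import Defs.
From mathcomp Require Import all_boot.
From mathcomp Require Import zify.

Lemma mod_wit k N r x : x = k * N + r -> r < N -> x %% N = r.
Proof. by move=> -> ?; rewrite modnMDl modn_small. Qed.

Lemma RQ2 Q x : x %% (Q*Q+1) != 0 -> (x*(Q*Q)) %% (Q*Q+1) = Q*Q+1 - x %% (Q*Q+1).
Proof.
move=> h; have := divn_eq x (Q*Q+1).
have := ltn_pmod x (isT : 0 < 1) . move=> _.
have hr : x %% (Q*Q+1) < Q*Q+1 by rewrite ltn_pmod // addn1.
move: h hr; set r := x %% _; set k := x %/ _ => h hr e.
apply: (@mod_wit (x - k - 1)); last by lia.
have hx : k + 1 <= x.
  rewrite e; have : 1 <= r by lia. nia.
rewrite {1}e. nia.
Qed.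

Lemma RQ4 Q x : 0 < Q -> (x*(Q*Q*(Q*Q))) %% (Q*Q+1) = x %% (Q*Q+1).
Proof.
move=> hQ; have -> : x*(Q*Q*(Q*Q)) = x*(Q*Q-1)*(Q*Q+1) + x.
  case: Q hQ => [|Q] //= _.
  nia.
by rewrite modnMDl.
Qed.

Lemma modQ Q a b : a < Q -> 0 < b -> b < Q -> ((a*Q+b)*Q) %% (Q*Q+1) = b*Q - a.
Proof.
move=> ha hb hbQ; apply: (@mod_wit a); last by nia.
nia.
Qed.


Lemma small_dvd q s b : 3 <= q -> 0 < s -> 0 < b -> b <= q -> q ^ s %| b -> s = 1 /\ b = q.
Proof.
move=> q3 s0 b0 bq hd.
have hs : s = 1.
  case: s s0 hd => [|[|s]] // _ hd.
  have := dvdn_leq b0 hd. rewrite !expnS => h2.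
  have h1 : 0 < q ^ s by rewrite expn_gt0 (leq_trans _ q3).
  (nia).
split=> //; move: hd; rewrite hs expn1 => /dvdnP [k hk].
move: b0 bq; rewrite hk; case: k {hk} => [|[|k]] //=; (nia).
Qed.


Lemma arA q P u a : 3 <= q -> q <= P -> u * q = a * (q * P) + q ->
  u * P + u <= q * P * (q * P) -> u < q * (q * P) - a /\ q * (q * P) - a + u < q * P * (q * P) + 1.
Proof.
move=> q3 Pq e h.
have ue : u = a * P + 1.
  apply/eqP; rewrite -(@eqn_pmul2r q) ?(leq_trans _ q3) //; apply/eqP.
  rewrite e; lia.
subst u.
have h3 : (a * P + 1 + a) * P < (q * (q * P)) * P.
  rewrite mulnDl mulnDl mul1n.
  move: h; rewrite mulnDl mul1n. nia.
rewrite ltn_pmul2r in h3; last by lia.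
have : 2 * (q * (q * P)) <= q * P * (q * P).
  have -> : q*P*(q*P) = P*(q*(q*P)) by lia.
  by rewrite leq_mul2r; lia.
lia.
Qed.

Lemma arB q Q u a : 3 <= q -> 3 * q <= Q -> a < Q -> u < q * Q ->
  u < (Q - q) * Q - a /\ (Q - q) * Q - a + u < Q * Q + 1.
Proof.
move=> h0 h1 h2 h3.
have : (q + 2) * Q <= (Q - q) * Q by rewrite leq_mul2r; lia.
have qQ : q <= Q by lia.
have : (Q - q) * Q + q * Q = Q * Q by rewrite -mulnDl subnK.
lia.
Qed.

Lemma arC q Q u a b : q < b -> b < Q - q -> a < Q -> u < q * Q ->
  u < b * Q - a /\ b * Q - a + u < Q * Q + 1.
Proof.
move=> h1 h2 h3 h4.
have : (q + 1) * Q <= b * Q by rewrite leq_mul2r; lia.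
have : (b + q + 1) * Q <= Q * Q by rewrite leq_mul2r; lia.
lia.
Qed.

Lemma core q t u : 3 <= q -> 2 <= t -> ~~ (q %| u) -> 0 < u ->
  u * (q^t.-1 + 1) < q^t * q^t + 1 ->
  u %/ q^t < u %% q^t -> u %% q^t + u %/ q^t < q^t ->
  forall d, 0 < d < 2*t ->
    u < (u * q^d) %% (q^t*q^t+1) /\ (u * q^d) %% (q^t*q^t+1) + u < q^t*q^t+1.
Proof.
move=> q3 t2 nqu u0 hP hab hba d /andP[d0 dlt].
have q0 : 0 < q by lia.
have [P PE] : {P | P = q^t.-1} by exists (q^t.-1).
have [Q QE] : {Q | Q = q^t} by exists (q^t).
have QP : Q = q * P by rewrite QE PE -expnS prednK // ltnW.
have Pq : q <= P by rewrite PE -{1}(expn1 q) leq_pexp2l //; lia.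
rewrite -QE in hab hba hP *; rewrite -PE in hP.
have Qge : 3 * q <= Q by rewrite QP; nia.
have Q0 : 0 < Q by lia.
have h2 : u * P + u <= Q * Q by move: hP; rewrite mulnDr muln1 addn1 ltnS.
have uqQ : u < q * Q.
  have : u * P < q * Q * P by rewrite QP; nia.
  by rewrite ltn_pmul2r //; lia.
case: (ltnP d t) => dt.
- have qdP : q^d <= P by rewrite PE; apply leq_pexp2l; lia.
  have qd3 : q <= q^d by rewrite -{1}(expn1 q) leq_pexp2l //; lia.
  have h1 : u * q^d <= u * P by rewrite leq_mul2l qdP orbT.
  rewrite modn_small; last by lia.
  split; nia.
- set s := d - t.
  have ds : d = s + t by rewrite /s subnK.
  have st : s < t by rewrite /s; lia.
  rewrite ds expnD mulnA -QE.
  have qsP : q^s <= P by rewrite PE; apply leq_pexp2l; lia.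
  have wP : u * q^s <= u * P by rewrite leq_mul2l qsP orbT.
  have [w wE] : {w | w = u * q^s} by exists (u * q^s).
  rewrite -wE in wP *.
  have [a aE] : {a | a = w %/ Q} by exists (w %/ Q).
  have [b bE] : {b | b = w %% Q} by exists (w %% Q).
  have ew : w = a * Q + b by rewrite aE bE -divn_eq.
  have bQ : b < Q by rewrite bE ltn_pmod.
  have aQ : a < Q.
    have h1 : a * Q <= u * P by rewrite (leq_trans _ wP) // ew leq_addr.
    by rewrite -(ltn_pmul2r Q0); lia.
  case: (posnP s) => s0.
  + move: wE; rewrite s0 expn0 muln1 => wE.
    have ea : a = u %/ Q by rewrite aE wE.
    have eb : b = u %% Q by rewrite bE wE.
    rewrite -ea -eb in hab hba.
    rewrite ew modQ //; last by lia.
    have k1 : (a + 1) * Q <= b * Q by rewrite leq_mul2r; lia.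
    have k2 : (a + b + 1) * Q <= Q * Q by rewrite leq_mul2r; lia.
    rewrite wE in ew.
    split; lia.
  + have hqsQ : q^s %| Q by rewrite QE dvdn_exp2l // ltnW.
    have hdb : q^s %| b.
      have : q^s %| w by rewrite wE dvdn_mull.
      by rewrite ew dvdn_addr // dvdn_mull.
    have b0 : 0 < b.
      case: (posnP b) => // b0.
      move: ew; rewrite b0 addn0 wE QE.
      rewrite -(subnK (ltnW st)) expnD mulnA => /eqP.
      rewrite eqn_pmul2r ?expn_gt0 ?q0 // => /eqP eu.
      case/negP: nqu; rewrite eu dvdn_mull //.
      rewrite -{1}(expn1 q) dvdn_exp2l //; lia.
    rewrite ew modQ //.
    case: (leqP b q) => bq.
      have [s1 bq'] := (@small_dvd q s b) q3 s0 b0 bq hdb.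
      move: ew; rewrite wE s1 expn1 bq' => ew.
      rewrite QP in ew h2 *.
      exact: arA.
    case: (leqP (Q - q) b) => bQq.
      have hb1 : 0 < Q - b by rewrite subn_gt0.
      have hb2 : Q - b <= q by rewrite leq_subCl.
      have [s1 bq'] := (@small_dvd q s (Q-b)) q3 s0 hb1 hb2 (dvdn_sub hqsQ hdb).
      have be : b = Q - q by rewrite -bq' subKn // ltnW.
      rewrite be.
      exact: arB.
    exact: (@arC q Q u a b bq bQq aQ uqQ).
Qed.



Section S.
Variables (q t i : nat).
Hypotheses (q3 : 3 <= q) (t2 : 2 <= t) (qodd : odd q) (i0 : 0 < i).
Let Q := q ^ t.
Let N := Q * Q + 1.
Let n := (q ^ (2 * t) + 1) %/ 2.
Let R d := (2 * i * q ^ d) %% N.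
Hypothesis hcore : forall d, 0 < d < 2 * t -> 2 * i < R d /\ R d + 2 * i < N.
Hypothesis h0 : 2 * i + 2 * i < N.

Lemma Nn : N = 2 * n.
Proof.
rewrite /N /n /Q mulnC -expnD addnn -mul2n.
rewrite mulnC divnK // dvdn2 oddD oddX qodd orbT //.
Qed.

Lemma q4 : q ^ (4 * t) = Q * Q * (Q * Q).
Proof. by rewrite /Q -!expnD; congr (_ ^ _); lia. Qed.

Lemma perk x k r : (x * q ^ (k * (4 * t) + r)) %% N = (x * q ^ r) %% N.
Proof.
elim: k => [|k IH]; first by rewrite mul0n add0n.
have -> : k.+1 * (4 * t) + r = (k * (4 * t) + r) + 4 * t by rewrite mulSn; lia.
rewrite expnD q4 mulnA RQ4 //.
by rewrite /Q expn_gt0 (leq_trans _ q3).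
Qed.

Lemma Rper d : R d = R (d %% (4 * t)).
Proof. by rewrite /R {1}(divn_eq d (4 * t)) perk. Qed.
Lemma R0 : R 0 = 2 * i.
Proof. by rewrite /R expn0 muln1 modn_small //; lia. Qed.

Lemma Rstrict d : d %% (4 * t) != 0 -> 2 * i < R d.
Proof.
move=> hd; rewrite Rper.
have : d %% (4 * t) < 4 * t by rewrite ltn_pmod //; lia.
move: hd; set r := d %% (4 * t) => hd hr.
case: (ltnP r (2 * t)) => hr2.
  by case: (hcore r) => //; apply/andP; split; lia.
have e : q ^ r = q ^ (r - 2 * t) * (Q * Q) by rewrite /Q -!expnD; congr (_ ^ _); lia.
rewrite /R e mulnA.
have h := RQ2 Q (2 * i * q ^ (r - 2 * t)).
have [r0 | r0] := posnP (r - 2 * t).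
  move: h; rewrite r0 expn0 muln1 modn_small -/N; last by lia.
  move=> ->; lia.
have [c1 c2] : 2 * i < R (r - 2 * t) /\ R (r - 2 * t) + 2 * i < N.
  by apply: hcore; apply/andP; split; lia.
rewrite h; first by rewrite -/N ltn_subRL.
by move: c1; rewrite /R -/N; case: (_ %% N).
Qed.
Let X d := (i * q ^ d) %% n.

Lemma X2dbl d : 2 * X d = R d.
Proof. by rewrite /X /R Nn muln_modr mulnA. Qed.

Lemma Xper d : X d = X (d %% (4 * t)).
Proof. by apply/eqP; rewrite -(eqn_pmul2l (isT : 0 < 2)) !X2dbl -Rper. Qed.

Lemma X0 : X 0 = i.
Proof. by apply/eqP; rewrite -(eqn_pmul2l (isT : 0 < 2)) X2dbl R0. Qed.

Lemma Xstrict d : d %% (4 * t) != 0 -> i < X d.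
Proof. by move=> h; rewrite -(ltn_pmul2l (isT : 0 < 2)) X2dbl Rstrict. Qed.

Lemma iltn : i < n.
Proof. by rewrite -(ltn_pmul2l (isT : 0 < 2)) -Nn; lia. Qed.

Lemma pow3 k : 2 <= k -> 4 * k < 3 ^ k.
Proof.
elim: k => [|k IH] // hk.
case: (ltnP k 2) => hk2.
  by have -> : k = 1 by lia.
have := IH hk2; rewrite expnS; lia.
Qed.

Lemma tltn : 4 * t < n.
Proof.
have h1 : 4 * t < Q.
  have h3 := @pow3 t t2. apply: (leq_trans h3); rewrite /Q leq_exp2r //; lia.
rewrite -(ltn_pmul2l (isT : 0 < 2)) -Nn /N.
have : 2 * Q <= Q * Q by rewrite leq_mul2r; apply/orP; right; lia.
lia.
Qed.

Lemma leader : coset_leader q n i.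
Proof.
split; first exact: iltn.
move=> x [j ->]; rewrite -/(X j).
have [h|h] := eqVneq (j %% (4 * t)) 0.
  by rewrite Xper h X0.
exact: ltnW (Xstrict _ h).
Qed.

Lemma card_coset : #|cyc_coset q n i| = 2 * (2 * t).
Proof.
have n0 : 0 < n by apply: leq_ltn_trans iltn.
have t0 : 0 < 4 * t by lia.
pose f (d : 'I_(4 * t)) : 'I_n := Ordinal (ltn_pmod (i * q ^ d) n0).
have -> : cyc_coset q n i = [set f d | d in [set: 'I_(4 * t)]].
  apply/setP => x; rewrite inE; apply/existsP/imsetP.
  - case=> j /eqP hj; exists (Ordinal (ltn_pmod j t0)) => //.
    by apply: val_inj => /=; rewrite -hj -/(X j) -/(X _) -Xper.
  - case=> d _ ->; exists (Ordinal (leq_trans (ltn_ord d) (ltnW tltn))).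
    by rewrite /=.
rewrite card_imset ?cardsT ?card_ord; first lia.
have key : forall d1 d2 : 'I_(4 * t), d1 < d2 -> X d1 = X d2 -> False.
  move=> d1 d2 lt12 e.
  have hc : X (d1 + (4 * t - d2)) = i.
    rewrite /X expnD mulnA -modnMml -/(X d1) e /X modnMml -mulnA -expnD.
    rewrite subnKC; last exact: ltnW.
    by rewrite -/(X _) Xper modnn X0.
  have : (d1 + (4 * t - d2)) %% (4 * t) != 0.
    have o2 := ltn_ord d2; rewrite modn_small; lia.
  by move/(Xstrict _); rewrite hc ltnn.
move=> d1 d2 /(congr1 val) /= e.
apply: val_inj => /=.
case: (ltngtP d1 d2) => // h.
- by case: (key _ _ h e).
- by case: (key _ _ h (esym e)).
Qed.
End S.


Lemma good q t i : 3 <= q -> 2 <= t -> odd q -> ~~ (q %| i) -> 0 < i ->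
  2 * i * (q^t.-1 + 1) < q^t * q^t + 1 ->
  (2 * i) %/ q^t < (2 * i) %% q^t -> (2 * i) %% q^t + (2 * i) %/ q^t < q^t ->
  coset_leader q ((q ^ (2 * t) + 1) %/ 2) i /\
  #|cyc_coset q ((q ^ (2 * t) + 1) %/ 2) i| = 2 * (2 * t).
Proof.
move=> q3 t2 qo nqi i0 hP hab hba.
have nq2 : ~~ (q %| 2 * i).
  by rewrite Gauss_dvdr // coprime_sym coprime2n.
have hc := core q t (2 * i) q3 t2 nq2 (ltac:(lia)) hP hab hba.
have h0 : 2 * i + 2 * i < q ^ t * q ^ t + 1.
  apply: leq_ltn_trans hP; rewrite mulnDr muln1 leq_add2r.
  by rewrite leq_pmulr // expn_gt0 (leq_trans _ q3).
split.
  exact: (@leader q t i q3 t2 qo i0 (fun d hd => hc d hd) h0).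
exact: (@card_coset q t i q3 t2 qo i0 (fun d hd => hc d hd) h0).
Qed.

Lemma bad q t i d : odd q ->
  (2 * i * q ^ d) %% (q ^ t * q ^ t + 1) < 2 * i ->
  ~ coset_leader q ((q ^ (2 * t) + 1) %/ 2) i.
Proof.
move=> qo h [_ hl].
have := hl _ (ex_intro _ d erefl).
rewrite -(leq_pmul2l (isT : 0 < 2)).
by rewrite (X2dbl q t i qo d) /= leqNgt h.
Qed.

Lemma dm Q x a b : x = a * Q + b -> b < Q -> x %/ Q = a /\ x %% Q = b.
Proof.
move=> -> hb; have Q0 : 0 < Q by lia.
by rewrite divnMDl // modnMDl divn_small // addn0 modn_small.
Qed.


Lemma ar1 q P i : 3 <= q -> q <= P -> i + 1 <= q * P -> 2 * i * (P + 1) < q * P * (q * P) + 1.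
Proof.
move=> q3 qP h.
have h1 : 2 * i * (P + 1) <= 2 * (q * P - 1) * (P + 1).
  by rewrite leq_mul2r leq_mul2l; apply/orP; right; apply/orP; right; lia.
have h2 : 3 * (q * P) * P <= q * (q * P) * P.
  by rewrite leq_mul2r leq_mul2r q3 !orbT.
nia.
Qed.

Lemma ar2 q P u : 3 <= q -> 1 <= P -> u + q * q <= q * (q * P) -> u * (P + 1) < q * P * (q * P) + 1.
Proof.
move=> q3 P1 h.
have h1 : (u + q * q) * (P + 1) <= q * (q * P) * (P + 1) by rewrite leq_mul2r h orbT.
nia.
Qed.

Lemma ar5 q P u : 3 <= q -> q * q * q <= P -> q * (q * P) + 2 <= u + q * q -> u < q * (q * P) ->
  u * P < q * P * (q * P) + 1 /\ q * P * (q * P) + 1 - u * P < u.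
Proof.
move=> q3 hP h1 h2.
have e1 : u * P < q * (q * P) * P by rewrite ltn_pmul2r //; lia.
have e2 : (q * (q * P) + 2) * (P + 1) <= (u + q * q) * (P + 1).
  by rewrite leq_mul2r; apply/orP; right; lia.
have e3 : 3 * (q * q) <= q * (q * q) by rewrite leq_mul2r q3 orbT.
split; nia.
Qed.


Lemma oddE x : odd x -> exists k, x = 2 * k + 1.
Proof. move=> ox; exists x./2; move: (odd_double_half x); rewrite ox -mul2n; lia. Qed.

Lemma notX_ab q t i : odd q -> 3 <= q -> 0 < t -> ~~ (q %| i) -> (q^t+1) %/ 2 <= i ->
  2*i + q*q <= q * q^t ->
  ~ X1 q t i -> ~ X2 q t i -> ~ X3 q t i -> ~ X4 q t i ->
  (2*i) %/ q^t < (2*i) %% q^t /\ (2*i) %% q^t + (2*i) %/ q^t < q^t.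
Proof.
move=> qo q3 t0 nqi hlo hhi.
rewrite /X1 /X2 /X3 /X4.
have qQ : q %| q ^ t by rewrite dvdn_exp.
have Qo : odd (q ^ t) by rewrite oddX qo orbT.
have [h eh] := oddE _ qo.
have [K eK] := oddE _ Qo.
have qq : q <= q * q by rewrite leq_pmulr; lia.
have hq : (q - 1) %/ 2 = h by rewrite eh; lia.
rewrite hq.
move: (q ^ t) qQ Qo eK hlo hhi => Q qQ Qo eK hlo hhi.
have e1 : (Q + 1) %/ 2 = K + 1 by rewrite eK; lia.
have e2 : (Q - 1) %/ 2 = K by rewrite eK; lia.
rewrite e1 e2 in hlo * => nX1 nX2 nX3 nX4.
have Q0 : 0 < Q by lia.
have ei := divn_eq i Q.
move: (i %/ Q) (i %% Q) (ltn_pmod i Q0) ei => a b bQ ei.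
have b0 : 0 < b.
  case: (posnP b) => // b0; case/negP: nqi; rewrite ei b0 addn0.
  exact: dvdn_mull.
have eqQ : q * Q = 2 * (h * Q) + Q by rewrite eh mulnDl mul1n mulnA.
have ah : a <= h.
  have : a * Q < (h + 1) * Q by rewrite mulnDl mul1n; lia.
  by move=> H; rewrite ltn_pmul2r // in H; lia.
have alth : K + 1 <= b + a -> a < h.
  move=> hb2; have [//|ah'] : a < h \/ a = h by lia.
  rewrite ah' in ei hb2; lia.
case: (leqP b K) => hb.
- have [-> ->] : (2 * i) %/ Q = 2 * a /\ (2 * i) %% Q = 2 * b.
    by apply: dm; lia.
  split.
    case: (ltnP a b) => hab; first lia.
    by exfalso; apply: nX1; exists a, b; split => //; lia.
  case: (ltnP (b + a) (K + 1)) => hab; first lia.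
  exfalso; apply: nX3; exists a, (K + 1 - b); split.
  + lia.
  + lia.
  + apply: alth; lia.
  + right; lia.
- have [-> ->] : (2 * i) %/ Q = 2 * a + 1 /\ (2 * i) %% Q = 2 * b - Q.
    by apply: dm; lia.
  split.
    case: (ltnP (2 * a + 1) (2 * b - Q)) => hab; first lia.
    have hb2 : b <= K + 1 + a by lia.
    case: (ltnP (b - K) (a + 1)) => hc.
      exfalso; apply: nX3; exists a, (b - K); split.
      + lia.
      + lia.
      + apply: alth; lia.
      + left; lia.
    exfalso; apply: nX4; exists a; split.
    + apply: alth; lia.
    + lia.
  case: (ltnP (2 * b - Q + (2 * a + 1)) Q) => hab //.
  exfalso; apply: nX2; exists (a + 1), (Q - b); split.
  + lia.
  + lia.
  + have [//|ah'] : a + 1 <= h \/ a = h by lia.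
    rewrite ah' in ei; lia.
  + lia.
Qed.


Lemma b1 Q i a b : 2 * a < Q -> 2 * b < Q -> 1 <= b -> b <= a -> i = a * Q + b ->
  (2 * i * Q) %% (Q * Q + 1) < 2 * i.
Proof.
move=> ha hb b1 ba ->.
have -> : 2 * (a * Q + b) = (2 * a) * Q + 2 * b by lia.
rewrite modQ //; try lia.
have : b * Q <= a * Q by rewrite leq_mul2r ba orbT.
lia.
Qed.

Lemma b2 Q i a b : 2 * a < Q -> 1 <= b -> b < a -> i = a * Q - b ->
  (2 * i * Q * (Q * Q)) %% (Q * Q + 1) < 2 * i.
Proof.
move=> ha b1 ba ->.
have e : 2 * (a * Q - b) = (2 * a - 1) * Q + (Q - 2 * b).
  have : Q <= a * Q by rewrite leq_pmull; lia.
  rewrite mulnBl mul1n; lia.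
have k1 : (Q - 2 * b) * Q = Q * Q - 2 * (b * Q) by rewrite mulnBl mulnA.
have k2 : b * Q + Q <= a * Q by rewrite -mulSnr leq_mul2r ba orbT.
have k3 : 2 * (b * Q) + Q <= Q * Q.
  have : (2 * b + 1) * Q <= Q * Q by rewrite leq_mul2r; apply/orP; right; lia.
  lia.
rewrite e RQ2; last by rewrite modQ; lia.
rewrite modQ; lia.
Qed.

Lemma b3l Q K i a b : Q = 2 * K + 1 -> 2 * a + 1 < Q -> 1 <= b -> b <= a ->
  i = a * Q + K + b -> (2 * i * Q) %% (Q * Q + 1) < 2 * i.
Proof.
move=> eK ha b1 ba ->.
have -> : 2 * (a * Q + K + b) = (2 * a + 1) * Q + (2 * b - 1) by lia.
rewrite modQ //; try lia.
have : (2 * b - 1) * Q <= (2 * a + 1) * Q by rewrite leq_mul2r; apply/orP; right; lia.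
lia.
Qed.

Lemma b3r Q K i a b : Q = 2 * K + 1 -> 2 * a + 1 < Q -> 1 <= b -> b <= a ->
  i = a * Q + (K + 1) - b -> (2 * i * Q * (Q * Q)) %% (Q * Q + 1) < 2 * i.
Proof.
move=> eK ha b1 ba ->.
have e : 2 * (a * Q + (K + 1) - b) = (2 * a) * Q + (Q + 1 - 2 * b) by lia.
have k1 : (Q + 1 - 2 * b) * Q = Q * Q + Q - 2 * (b * Q) by rewrite mulnBl mulnDl mul1n mulnA.
have k2 : b * Q <= a * Q by rewrite leq_mul2r ba orbT.
have k3 : 2 * (b * Q) + Q <= Q * Q.
  have : (2 * b + 1) * Q <= Q * Q by rewrite leq_mul2r; apply/orP; right; lia.
  lia.
rewrite e RQ2; last by rewrite modQ; lia.
rewrite modQ; lia.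
Qed.

Lemma b4 Q K i a : Q = 2 * K + 1 -> 2 * a + 1 < Q ->
  i = a * (Q + 1) + (K + 1) -> (2 * i * Q) %% (Q * Q + 1) < 2 * i.
Proof.
move=> eK ha ->.
have -> : 2 * (a * (Q + 1) + (K + 1)) = (2 * a + 1) * Q + (2 * a + 1) by lia.
rewrite modQ //; lia.
Qed.

Theorem lemma14 (q t : nat) (hpp : prime_power q) (hodd : odd q) :
  let m := 2 * t in
  let n := (q ^ m + 1) %/ 2 in
  (4 <= m ->
     (forall i : nat, (q ^ t + 1) %/ 2 <= i <= q ^ t + 1 -> ~~ (q %| i) ->
        i != (q ^ t + 1) %/ 2 -> i != q ^ t + 1 ->
        coset_leader q n i /\ #|cyc_coset q n i| = 2 * m)
     /\ ~ coset_leader q n ((q ^ t + 1) %/ 2)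
     /\ ~ coset_leader q n (q ^ t + 1))
  /\
  (8 <= m ->
     forall i : nat, (q ^ t + 1) %/ 2 <= i <= (q ^ t.+1 - 1) %/ 2 -> ~~ (q %| i) ->
       ((~ (X1 q t i \/ X2 q t i \/ X3 q t i \/ X4 q t i \/ X5 q t i) ->
           coset_leader q n i /\ #|cyc_coset q n i| = 2 * m)
        /\ ((X1 q t i \/ X2 q t i \/ X3 q t i \/ X4 q t i \/ X5 q t i) ->
           ~ coset_leader q n i))).
Proof.
Proof.
cbv zeta.
have q3 : 3 <= q.
  have [p [k [pp [k0 eqq]]]] := hpp.
  have p2 : 1 < p by apply: prime_gt1.
  have pq : p <= q by rewrite eqq -{1}(expn1 p) leq_pexp2l //; lia.
  have q2 : q != 2 by apply/eqP => e; rewrite e in hodd.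
  lia.
have [h eh] := oddE _ hodd.
have hq : (q - 1) %/ 2 = h by rewrite eh; lia.
have Qo : odd (q ^ t) by rewrite oddX hodd orbT.
have [K eK] := oddE _ Qo.
have e1 : (q ^ t + 1) %/ 2 = K + 1 by rewrite eK; lia.
split.
- move=> m4.
  have t2 : 2 <= t by lia.
  have QP : q ^ t = q * q ^ t.-1 by rewrite -expnS prednK //; lia.
  have Pq : q <= q ^ t.-1 by rewrite -{1}(expn1 q) leq_pexp2l //; lia.
  have qQ : q %| q ^ t by rewrite dvdn_exp //; lia.
  have Q9 : 3 * q <= q ^ t by rewrite QP; nia.
  rewrite e1.
  split; [|split].
  + move=> i /andP[lo hi] nqi ne1 ne2.
    have iQ : i != q ^ t by apply: contra nqi => /eqP ->.
    have hi' : i + 1 <= q ^ t by lia.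
    apply: good => //; try lia.
    * rewrite QP; apply: ar1 => //; lia.
    * have [-> ->] : (2 * i) %/ q ^ t = 1 /\ (2 * i) %% q ^ t = 2 * i - q ^ t.
        by apply: dm; lia.
      lia.
    * have [-> ->] : (2 * i) %/ q ^ t = 1 /\ (2 * i) %% q ^ t = 2 * i - q ^ t.
        by apply: dm; lia.
      lia.
  + apply: (bad q t (K + 1) t hodd).
    have e : 2 * (K + 1) = 1 * q ^ t + 1 by lia.
    rewrite e modQ; lia.
  + apply: (bad q t (q ^ t + 1) t hodd).
    have e : 2 * (q ^ t + 1) = 2 * q ^ t + 2 by lia.
    rewrite e modQ; lia.
- move=> m8 i /andP[lo hi] nqi.
  have t4 : 4 <= t by lia.
  have QP : q ^ t = q * q ^ t.-1 by rewrite -expnS prednK //; lia.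
  have P3 : q * (q * q) <= q ^ t.-1.
    by rewrite -(expn1 q) -!expnS leq_pexp2l //; lia.
  have Pq : q <= q ^ t.-1 by rewrite -{1}(expn1 q) leq_pexp2l //; lia.
  have qQ : q %| q ^ t by rewrite dvdn_exp //; lia.
  have qq3 : 3 * q <= q * q by rewrite mulnC leq_mul2l q3 orbT.
  have Q9 : q * q <= q ^ t by rewrite QP leq_mul2l Pq orbT.
  have oQ : q * q ^ t = 2 * (2 * h * K + h + K) + 1 by rewrite eK eh; lia.
  have oq : q * q = 2 * (2 * h * h + 2 * h) + 1 by rewrite eh; lia.
  rewrite expnS in hi.
  have hi2 : 2 * i < q * q ^ t by lia.
  split.
  + move=> nX.
    have nX1 : ~ X1 q t i by move=> H; apply: nX; left.
    have nX2 : ~ X2 q t i by move=> H; apply: nX; right; left.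
    have nX3 : ~ X3 q t i by move=> H; apply: nX; right; right; left.
    have nX4 : ~ X4 q t i by move=> H; apply: nX; right; right; right; left.
    have nX5 : ~ X5 q t i by move=> H; apply: nX; right; right; right; right.
    have hhi : 2 * i + q * q <= q * q ^ t.
      case: (leqP (2 * i + q * q) (q * q ^ t)) => // H.
      exfalso; apply: nX5; split => //; rewrite expnS; lia.
    have [ab1 ab2] := notX_ab q t i hodd q3 (ltac:(lia)) nqi lo hhi nX1 nX2 nX3 nX4.
    apply: good => //; try lia.
    rewrite QP; apply: ar2 => //; try lia.
  + move=> hX.
    have qQle : q <= q ^ t by lia.
    have e2 : (q ^ t - 1) %/ 2 = K by rewrite eK; lia.
    have e3 : q ^ (t + t + t) = q ^ t * (q ^ t * q ^ t) by rewrite !expnD mulnA.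
    case: hX => [[a [b [hb1 hba ah ei]]] | [[a [b [hb1 hba ah ei]]] |
                 [[a [b [hb1 hba ah ei]]] | [[a [ah ei]] | [lo5 hi5 _]]]]].
    * rewrite hq in ah; apply: (bad q t i t hodd).
      by apply: (@b1 (q ^ t) i a b) => //; lia.
    * rewrite hq in ah; apply: (bad q t i (t + t + t) hodd).
      rewrite e3 mulnA.
      by apply: (@b2 (q ^ t) i a b) => //; lia.
    * rewrite hq in ah; case: ei => ei.
        apply: (bad q t i t hodd).
        rewrite e2 in ei.
        by apply: (@b3l (q ^ t) K i a b) => //; lia.
      apply: (bad q t i (t + t + t) hodd).
      rewrite e3 mulnA.
      rewrite e1 in ei.
      by apply: (@b3r (q ^ t) K i a b) => //; lia.
    * rewrite hq in ah; rewrite e1 in ei; apply: (bad q t i t hodd).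
      by apply: (@b4 (q ^ t) K i a) => //; lia.
    * apply: (bad q t i (t.-1 + (t + t)) hodd).
      rewrite !expnD !mulnA.
      rewrite !expnS in lo5.
      have lo6 : q * q ^ t + 2 <= 2 * i + q * q by lia.
      move: lo6 hi2; rewrite QP => lo6 hi6.
      have P3' : q * q * q <= q ^ t.-1 by rewrite -mulnA.
      have [c1 c2] := ar5 q (q ^ t.-1) (2 * i) q3 P3' lo6 hi6.
      rewrite -mulnA RQ2 modn_small //.
      have P0 : 0 < q ^ t.-1 by lia.
      have i0 : 0 < i by lia.
      by rewrite -lt0n !muln_gt0 P0 i0.
Qed.
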